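(* For all real $h,t$ with $0<h<t<1$, $$\lim_{k \to \infty} \sum_{n=0}^{\infty} B^n_k(t;h) = \frac{1-h}{t-h},$$ where the limit is over nonnegative integers $k$.
   Context: For $h\ge 0$, the $h$-Bernstein polynomials are $$B^n_k(t;h) = \binom{n}{k}\frac{\prod_{i=0}^{k-1}(t+ih)\prod_{i=0}^{n-k-1}(1-t+ih)}{\prod_{i=0}^{n-1}(1+ih)}$$ for integers $0\le k\le n$ (empty products equal $1$), and $B^n_k(t;h)=0$ for $n<k$. *)

(* Defs.v *)
From Stdlib Require Import Reals Arith.
From Coquelicot Require Import Coquelicot.
Open Scope R_scope.

Fixpoint rising (x h : R) (m : nat) : R :=
  match m with
  | O => 1
  | S m' => rising x h m' * (x + INR m' * h)
  end.

Definition hBernstein (n k : nat) (t h : R) : R :=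
  if (k <=? n)%nat then
    Binomial.C n k * rising t h k * rising (1 - t) h (n - k) / rising 1 h n
  else 0.

(* Main.v *)
Require Import Defs.
From Stdlib Require Import Reals Lra Lia.
From Coquelicot Require Import Coquelicot.
Open Scope R_scope.

Lemma rising_S x h m : rising x h (S m) = rising x h m * (x + INR m * h).
Proof. reflexivity. Qed.

Lemma rising_Sm x h m : rising (x - h) h (S m) = (x - h) * rising x h m.
Proof.
  induction m as [|m IH].
  - simpl. ring.
  - rewrite rising_S, IH, rising_S, S_INR. ring.
Qed.

Lemma rising_pos x h m : 0 < x -> 0 <= h -> 0 < rising x h m.
Proof.
  intros Hx Hh; induction m as [|m IH]; simpl; [lra|].
  apply Rmult_lt_0_compat; [exact IH|].
  assert (0 <= INR m * h) by (apply Rmult_le_pos; [apply pos_INR|lra]). lra.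
Qed.

Definition gB (t h : R) (n j : nat) : R :=
  if (j <=? n)%nat then
    Binomial.C n j * rising (t - h) h j * rising (1 - t) h (n - j) / rising (1 - h) h n
  else 0.

Definition GB t h k n := sum_f_R0 (fun j => gB t h n j) k.

Section S.
Variables h t : R.
Hypothesis Hh : 0 < h.
Hypothesis Hht : h < t.
Hypothesis Ht1 : t < 1.

Let K := (1 - h) / (t - h).

Lemma incr p n :
  hBernstein n (S p) t h - hBernstein n p t h = K * (gB t h n (S p) - gB t h (S n) (S p)).
Proof.
  unfold K.
  destruct (Compare_dec.lt_eq_lt_dec n p) as [[Hlt|Heq]|Hgt].
  - unfold hBernstein, gB.
    rewrite (proj2 (Nat.leb_gt (S p) n)) by lia.
    rewrite (proj2 (Nat.leb_gt p n)) by lia.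
    rewrite (proj2 (Nat.leb_gt (S p) (S n))) by lia.
    field. lra.
  - subst n. unfold hBernstein, gB.
    rewrite (proj2 (Nat.leb_gt (S p) p)) by lia.
    rewrite Nat.leb_refl, Nat.leb_refl, !Nat.sub_diag, !C_n_n.
    rewrite rising_Sm, rising_Sm. simpl rising at 2 4.
    assert (0 < rising t h p) by (apply rising_pos; lra).
    assert (0 < rising 1 h p) by (apply rising_pos; lra).
    change (rising (1 - t) h 0) with 1. field. split; lra.
  - destruct n as [|n]; [lia|].
    destruct (Nat.le_exists_sub p n) as [q [Hq _]]; [lia|]. subst n.
    unfold hBernstein, gB.
    rewrite (proj2 (Nat.leb_le (S p) (S (q + p)))) by lia.
    rewrite (proj2 (Nat.leb_le p (S (q + p)))) by lia.
    rewrite (proj2 (Nat.leb_le (S p) (S (S (q + p))))) by lia.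
    replace (S (q + p) - S p)%nat with q by lia.
    replace (S (q + p) - p)%nat with (S q) by lia.
    replace (S (S (q + p)) - S p)%nat with (S q) by lia.
    unfold Binomial.C.
    replace (S (q + p) - S p)%nat with q by lia.
    replace (S (q + p) - p)%nat with (S q) by lia.
    replace (S (S (q + p)) - S p)%nat with (S q) by lia.
    rewrite (rising_Sm t h p), (rising_Sm 1 h (S (q+p))), (rising_Sm 1 h (q+p)).
    rewrite (rising_S t h p), (rising_S (1-t) h q), (rising_S 1 h (q+p)).
    rewrite !fact_simpl, !mult_INR.

    rewrite !S_INR, !plus_INR.
    assert (0 < rising 1 h (q+p)) by (apply rising_pos; lra).
    assert (0 < 1 + (INR q + INR p) * h).
    { assert (0 <= (INR q + INR p) * h) by (apply Rmult_le_pos; [generalize (pos_INR q) (pos_INR p); lra|lra]). lra. }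
    assert (0 <= INR q) by apply pos_INR.
    assert (0 <= INR p) by apply pos_INR.
    pose proof (INR_fact_neq_0 q). pose proof (INR_fact_neq_0 p).
    pose proof (INR_fact_neq_0 (q+p)).
    rewrite ?plus_INR in *.
    field. repeat split; lra.
Qed.

Lemma tele k n : hBernstein n k t h = K * (GB t h k n - GB t h k (S n)).
Proof.
  unfold K. induction k as [|p IH].
  - unfold GB; simpl sum_f_R0. unfold hBernstein, gB.
    rewrite !(proj2 (Nat.leb_le 0 _)) by lia.
    rewrite !Nat.sub_0_r, !C_n_0. change (rising t h 0) with 1.
    change (rising (t-h) h 0) with 1.
    destruct n as [|m].
    + change (rising (1-t) h 0) with 1. change (rising 1 h 0) with 1.
      change (rising (1-h) h 0) with 1.
      rewrite (rising_Sm 1 h 0), (rising_S (1-t) h 0). simpl INR.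
      change (rising 1 h 0) with 1. change (rising (1-t) h 0) with 1.
      field. split; lra.
    + rewrite (rising_Sm 1 h (S m)), (rising_Sm 1 h m), (rising_S 1 h m),
        (rising_S (1-t) h (S m)).
      assert (0 < rising 1 h m) by (apply rising_pos; lra).
      assert (0 < 1 + INR m * h).
      { assert (0 <= INR m * h) by (apply Rmult_le_pos; [apply pos_INR|lra]). lra. }
      rewrite S_INR. field. repeat split; lra.
  - pose proof (incr p n) as Hi. unfold K in Hi.
    unfold GB in *. simpl sum_f_R0. lra.
Qed.

Lemma GB0 k : GB t h k 0 = 1.
Proof.
  unfold GB. induction k as [|k IH].
  - simpl. unfold gB. simpl. unfold Binomial.C. simpl. field.
  - simpl sum_f_R0. rewrite IH. unfold gB. simpl. ring.
Qed.

Lemma partial k N : sum_f_R0 (fun n => hBernstein n k t h) N = K * (1 - GB t h k (S N)).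
Proof.
  induction N as [|N IH].
  - simpl. rewrite tele, GB0. ring.
  - simpl sum_f_R0. rewrite IH, tele. ring.
Qed.
End S.

Lemma fact_rising j M : INR (Factorial.fact (j + M)) = INR (Factorial.fact M) * rising (INR M + 1) 1 j.
Proof.
  induction j as [|j IH]; simpl rising.
  - simpl. ring.
  - change (S j + M)%nat with (S (j + M)). rewrite fact_simpl, mult_INR, IH, S_INR, plus_INR. ring.
Qed.

Lemma rising_split x h m n : rising x h (m + n) = rising x h m * rising (x + INR m * h) h n.
Proof.
  induction n as [|n IH].
  - rewrite Nat.add_0_r. simpl. ring.
  - rewrite Nat.add_succ_r, !rising_S, IH, plus_INR. ring.
Qed.

Lemma rising_nonneg x h m : 0 <= x -> 0 <= h -> 0 <= rising x h m.
Proof.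
  intros Hx Hh; induction m as [|m IH]; simpl; [lra|].
  apply Rmult_le_pos; [exact IH|].
  assert (0 <= INR m * h) by (apply Rmult_le_pos; [apply pos_INR|lra]). lra.
Qed.

Lemma rising_le u h' v h c j : 0 <= u -> 0 <= h' -> 
  (forall i, u + INR i * h' <= c * (v + INR i * h)) ->
  rising u h' j <= c ^ j * rising v h j.
Proof.
  intros Hu Hh' Hc. induction j as [|j IH]; simpl; [lra|].
  replace (c * c ^ j * (rising v h j * (v + INR j * h))) with
     ((c ^ j * rising v h j) * (c * (v + INR j * h))) by ring.
  apply Rmult_le_compat; auto.
  - apply rising_nonneg; auto.
  - assert (0 <= INR j * h') by (apply Rmult_le_pos; [apply pos_INR|lra]). lra.
Qed.

Lemma ln_step x : 0 < x -> ln (x + 1) - ln x <= / x.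
Proof.
  intro Hx.
  replace (x + 1) with (x * (1 + / x)) by (field; lra).
  rewrite ln_mult; [| lra | ].
  2:{ assert (0 < / x) by (apply Rinv_0_lt_compat; lra). lra. }
  assert (0 < / x) by (apply Rinv_0_lt_compat; lra).
  assert (ln (1 + / x) < ln (exp (/ x))).
  { apply ln_increasing; [lra|]. apply exp_ineq1. lra. }
  rewrite ln_exp in H0. lra.
Qed.

Lemma ratio_bound z e h M : 0 < z -> 0 < e -> 0 < h ->
  rising z h M * (1 + e / (z + h) * ln (INR M + 1)) <= rising (z + e) h M.
Proof.
  intros Hz He Hh. induction M as [|M IH].
  - simpl. replace (0+1) with 1 by ring. rewrite ln_1. lra.
  - rewrite !rising_S, S_INR.
    set (L0 := ln (INR M + 1)) in *. set (L1 := ln (INR M + 1 + 1)).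
    assert (HM : 0 <= INR M) by apply pos_INR.
    assert (Hs : L1 - L0 <= / (INR M + 1)) by (apply ln_step; lra).
    assert (HL0 : 0 <= L0).
    { unfold L0. rewrite <- ln_1. apply ln_le; lra. }
    assert (Hr : 0 < rising z h M) by (apply rising_pos; lra).
    assert (HMh : 0 <= INR M * h) by (apply Rmult_le_pos; lra).
    apply Rle_trans with (rising z h M * (1 + e / (z + h) * L0) * (z + e + INR M * h)).
    2:{ apply Rmult_le_compat_r; lra. }
    rewrite Rmult_assoc, Rmult_assoc. apply Rmult_le_compat_l; [lra|].
    assert (Hk : 0 < e / (z + h)) by (apply Rdiv_lt_0_compat; lra).
    assert (e / (z + h) * (L1 - L0) * (z + INR M * h) <= e).
    { apply Rle_trans with (e / (z + h) * / (INR M + 1) * (z + INR M * h)).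
      - apply Rmult_le_compat_r; [lra|]. apply Rmult_le_compat_l; lra.
      - apply Rle_trans with (e * ((z + INR M * h) / ((z + h) * (INR M + 1)))).
        + right. field. lra.
        + rewrite <- (Rmult_1_r e) at 2. apply Rmult_le_compat_l; [lra|].
          apply Rmult_le_reg_r with ((z + h) * (INR M + 1)).
          { apply Rmult_lt_0_compat; lra. }
          unfold Rdiv. rewrite Rmult_assoc, Rinv_l, Rmult_1_r, Rmult_1_l.
          2:{ apply Rgt_not_eq. apply Rmult_lt_0_compat; lra. }
          nra. }
    assert (0 <= e / (z + h) * L0 * e) by (apply Rmult_le_pos; [apply Rmult_le_pos|]; lra).
    nra.
Qed.

Section L.
Variables h t : R.
Hypothesis Hh : 0 < h.
Hypothesis Hht : h < t.
Hypothesis Ht1 : t < 1.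

Lemma gB_formula j M :
  gB t h (M + j) j =
  (rising (t - h) h j * rising (1 - t) h j / (rising (1 - h) h j * INR (Factorial.fact j))) *
  (rising (INR M + 1) 1 j / rising (1 - t + INR M * h) h j) *
  (rising (1 - t + INR j * h) h M / rising (1 - t + INR j * h + (t - h)) h M).
Proof.
  unfold gB. rewrite (proj2 (Nat.leb_le j (M + j))) by lia.
  replace (M + j - j)%nat with M by lia.
  unfold Binomial.C. replace (M + j - j)%nat with M by lia.
  rewrite (Nat.add_comm M j), fact_rising, rising_split.
  replace (1 - h + INR j * h) with (1 - t + INR j * h + (t - h)) by ring.
  assert (Hy : rising (1 - t) h M * rising (1 - t + INR M * h) h j =
               rising (1 - t) h j * rising (1 - t + INR j * h) h M).
  { rewrite <- !rising_split. rewrite Nat.add_comm. reflexivity. }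
  assert (0 < rising (1 - t + INR M * h) h j).
  { apply rising_pos; [|lra]. assert (0 <= INR M * h) by (apply Rmult_le_pos; [apply pos_INR|lra]). lra. }
  assert (0 < rising (1 - t + INR j * h + (t - h)) h M).
  { apply rising_pos; [|lra]. assert (0 <= INR j * h) by (apply Rmult_le_pos; [apply pos_INR|lra]). lra. }
  assert (0 < rising (1 - h) h j) by (apply rising_pos; lra).
  pose proof (INR_fact_neq_0 j). pose proof (INR_fact_neq_0 M).
  apply Rmult_eq_reg_r with (rising (1 - t + INR M * h) h j); [|lra].
  field_simplify; [| repeat split; lra | repeat split; lra].
  rewrite (Rmult_assoc (rising (INR M + 1) 1 j * rising (t - h) h j)), Hy. field. repeat split; lra.
Qed.

Lemma gB_lim j : is_lim_seq (fun N => gB t h N j) 0.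
Proof.
  apply (is_lim_seq_incr_n _ j).
  set (y := 1 - t). set (z := 1 - t + INR j * h). set (e := t - h).
  set (Aj := rising (t - h) h j * rising (1 - t) h j / (rising (1 - h) h j * INR (Factorial.fact j))).
  set (c := / y + / h).
  set (k := e / (z + h)).
  assert (Hy : 0 < y) by (unfold y; lra).
  assert (He : 0 < e) by (unfold e; lra).
  assert (Hz : 0 < z).
  { unfold z. assert (0 <= INR j * h) by (apply Rmult_le_pos; [apply pos_INR|lra]). lra. }
  assert (Hk : 0 < k) by (unfold k; apply Rdiv_lt_0_compat; lra).
  assert (HA : 0 <= Aj).
  { unfold Aj. apply Rmult_le_pos.
    - apply Rmult_le_pos; apply rising_nonneg; lra.
    - apply Rlt_le, Rinv_0_lt_compat, Rmult_lt_0_compat.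
      + apply rising_pos; lra.
      + apply lt_0_INR. apply Factorial.lt_O_fact. }
  assert (Hc : 0 <= c).
  { unfold c. assert (0 < / y) by (apply Rinv_0_lt_compat; lra).
    assert (0 < / h) by (apply Rinv_0_lt_compat; lra). lra. }
  apply is_lim_seq_le_le with (u := fun _ => 0)
    (w := fun M => (Aj * c ^ j / k) * / (/ k + ln (INR M + 1))).
  - intro M. rewrite gB_formula. fold Aj. fold z e y.

    assert (HM : 0 <= INR M) by apply pos_INR.
    assert (HL : 0 <= ln (INR M + 1)).
    { rewrite <- ln_1. apply ln_le; lra. }
    assert (P1 : 0 < rising (y + INR M * h) h j).
    { apply rising_pos; [|lra]. assert (0 <= INR M * h) by (apply Rmult_le_pos; lra). lra. }
    assert (P2 : 0 < rising z h M) by (apply rising_pos; lra).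
    assert (P3 : 0 < rising (z + e) h M) by (apply rising_pos; lra).
    assert (P4 : 0 <= rising (INR M + 1) 1 j) by (apply rising_nonneg; lra).
    assert (R1 : rising (INR M + 1) 1 j / rising (y + INR M * h) h j <= c ^ j).
    { apply Rmult_le_reg_r with (rising (y + INR M * h) h j); [lra|].
      unfold Rdiv. rewrite Rmult_assoc, Rinv_l, Rmult_1_r by lra.
      apply rising_le; [lra|lra|].
      intro i. assert (Hi : 0 <= INR i) by apply pos_INR.
      set (s := INR M + INR i).
      replace (INR M + 1 + INR i * 1) with (1 + s) by (unfold s; ring).
      replace (c * (y + INR M * h + INR i * h)) with (1 + s + (y * / h) + s * h * / y)
        by (unfold c, s; field; lra).
      assert (0 <= y * / h) by (apply Rmult_le_pos; [lra| apply Rlt_le, Rinv_0_lt_compat; lra]).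
      assert (0 <= s * h * / y).
      { apply Rmult_le_pos; [apply Rmult_le_pos; unfold s; lra| apply Rlt_le, Rinv_0_lt_compat; lra]. }
      lra. }
    assert (R2 : rising z h M / rising (z + e) h M <= / k * / (/ k + ln (INR M + 1))).
    { pose proof (ratio_bound z e h M Hz He Hh) as Hb. fold k in Hb.
      rewrite <- Rinv_mult.
      replace (k * (/ k + ln (INR M + 1))) with (1 + k * ln (INR M + 1)) by (field; lra).
      assert (0 < 1 + k * ln (INR M + 1)) by nra.
      apply Rmult_le_reg_r with (rising (z + e) h M * (1 + k * ln (INR M + 1))).
      { apply Rmult_lt_0_compat; lra. }
      replace (rising z h M / rising (z + e) h M * (rising (z + e) h M * (1 + k * ln (INR M + 1))))
        with (rising z h M * (1 + k * ln (INR M + 1))) by (field; lra).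
      replace (/ (1 + k * ln (INR M + 1)) * (rising (z + e) h M * (1 + k * ln (INR M + 1))))
        with (rising (z + e) h M) by (field; lra).
      exact Hb. }
    assert (Q1 : 0 <= rising (INR M + 1) 1 j / rising (y + INR M * h) h j).
    { apply Rmult_le_pos; [lra| apply Rlt_le, Rinv_0_lt_compat; lra]. }
    assert (Q2 : 0 <= rising z h M / rising (z + e) h M).
    { apply Rmult_le_pos; [lra| apply Rlt_le, Rinv_0_lt_compat; lra]. }
    split.
    + apply Rmult_le_pos; [apply Rmult_le_pos|]; lra.
    + replace (Aj * c ^ j / k * / (/ k + ln (INR M + 1)))
        with (Aj * (c ^ j * (/ k * / (/ k + ln (INR M + 1))))) by (unfold Rdiv; ring).
      rewrite Rmult_assoc. apply Rmult_le_compat_l; [lra|].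
      apply Rmult_le_compat; try lra.
  - apply is_lim_seq_const.
  - replace (Finite 0) with (Finite ((Aj * c ^ j / k) * 0)) by (f_equal; ring).
    apply is_lim_seq_mult'; [apply is_lim_seq_const|].
    assert (HL : is_lim_seq (fun M => ln (INR M + 1)) p_infty).
    { assert (HI : is_lim_seq (fun M => INR M + 1) p_infty).
      { apply is_lim_seq_ext with (fun M => INR (S M)); [intro; apply S_INR|].
        apply (is_lim_seq_incr_1 INR). apply is_lim_seq_INR. }
      unfold is_lim_seq. eapply filterlim_comp; [exact HI| exact is_lim_ln_p]. }
    assert (HL2 : is_lim_seq (fun M => / k + ln (INR M + 1)) p_infty).
    { apply is_lim_seq_le_p_loc with (fun M => ln (INR M + 1)); [|exact HL].
      exists O. intros. assert (0 < / k) by (apply Rinv_0_lt_compat; lra). lra. }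
    apply (is_lim_seq_inv _ _ HL2). discriminate.
Qed.
End L.

Lemma GB_lim h t k : 0 < h -> h < t -> t < 1 -> is_lim_seq (fun N => GB t h k N) 0.
Proof.
  intros Hh Hht Ht1. unfold GB. induction k as [|k IH].
  - simpl. apply gB_lim; auto.
  - simpl sum_f_R0. replace (Finite 0) with (Finite (0 + 0)) by (f_equal; ring).
    apply is_lim_seq_plus'; [exact IH| apply gB_lim; auto].
Qed.

Theorem mainTheorem10 (h t : R) :
  0 < h -> h < t -> t < 1 ->
  (forall k : nat, ex_series (fun n : nat => hBernstein n k t h)) /\
  is_lim_seq (fun k : nat => Series (fun n : nat => hBernstein n k t h))
             ((1 - h) / (t - h)).
Proof.
  intros Hh Hht Ht1.
  assert (HS : forall k, is_series (fun n => hBernstein n k t h) ((1 - h) / (t - h))).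
  { intro k.
    assert (HL : is_lim_seq (sum_n (fun n => hBernstein n k t h)) ((1 - h) / (t - h))).
    { apply is_lim_seq_ext with (fun N => (1 - h) / (t - h) * (1 - GB t h k (S N))).
      { intro N. rewrite sum_n_Reals. symmetry. apply partial; auto. }
      replace (Finite ((1 - h) / (t - h))) with (Finite ((1 - h) / (t - h) * (1 - 0))) by (f_equal; ring).
      apply is_lim_seq_mult'; [apply is_lim_seq_const|].
      apply is_lim_seq_minus'; [apply is_lim_seq_const|].
      apply (is_lim_seq_incr_1 (fun N => GB t h k N)). apply GB_lim; auto. }
    exact HL. }
  split.
  - intro k. eexists. apply HS.
  - apply is_lim_seq_ext with (fun _ => (1 - h) / (t - h)).
    + intro k. symmetry. apply is_series_unique. apply HS.
    + apply is_lim_seq_const.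
Qed.
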